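(* Let $V$ be a finite set, $f:2^V\to\mathbb{R}$ non-decreasing and submodular, $b\ge 1$ an integer with $|V|\ge b$, and $A\subseteq V$ an advice set with $|A|=b$. Let $U$ be the output of the learning-augmented algorithm described in the context (run with arbitrary subsets $A_i\subseteq A$, $|A_i|=i$), and let $\mathrm{OPT}\subseteq V$ be any set with $|\mathrm{OPT}|=b$ maximizing $f$ among all $b$-element subsets of $V$. Then $f(U)\ge f(A)$ and \[ f(U)\;\ge\;\max_{i\in\{0,1,\dots,b-1\}}\left[f(A_i)+\frac{1-\frac1e}{\left\lceil \frac{|\mathrm{OPT}\setminus A_i|}{b-i}\right\rceil}\,\bigl(f(\mathrm{OPT}\cup A_i)-f(A_i)\bigr)\right]. \]
   Context: $f$ non-decreasing means $f(X)\le f(Y)$ for $X\subseteq Y$; submodular means $f(X\cup\{e\})-f(X)\ge f(Y\cup\{e\})-f(Y)$ for $X\subseteq Y\subseteq V$, $e\notin Y$. Learning-augmented algorithm: choose subsets $A_0,A_1,\dots,A_b$ of $A$ with $|A_i|=i$ (so $A_0=\emptyset$, $A_b=A$). For each $i\in\{0,\dots,b\}$: start with $B_i=\emptyset$; while $|B_i|<b-i$, add to $B_i$ an element $e\in V\setminus(A_i\cup B_i)$ maximizing $f(A_i\cup B_i\cup\{e\})-f(A_i\cup B_i)$. Set $U_i=A_i\cup B_i$ (so $|U_i|=b$). Output $U=U_{i^*}$ where $i^*$ maximizes $f(U_i)$ over $i\in\{0,\dots,b\}$. *)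

(* Defs.v *)
From mathcomp Require Import all_boot all_order all_algebra.
From mathcomp Require Import reals sequences exp.
Set Implicit Arguments. Unset Strict Implicit. Unset Printing Implicit Defensive.
Import Order.TTheory GRing.Theory Num.Theory.
Local Open Scope ring_scope.

Section Defs.
Variables (R : realType) (V : finType).
Implicit Types (f : {set V} -> R) (X Y B : {set V}).

Definition nondecreasing_setfun f := forall X Y, X \subset Y -> f X <= f Y.

Definition submodular_setfun f := forall X Y (e : V), X \subset Y -> e \notin Y ->
  f (e |: Y) - f Y <= f (e |: X) - f X.

(* [greedy_run f X k B]: B is a possible set produced by k steps of the greedy
   procedure started from X: at each step an element e outside X :|: B (current)
   maximizing the marginal gain f (X :|: B :|: {e}) - f (X :|: B) is added
   (ties broken arbitrarily). *)
Inductive greedy_run f X : nat -> {set V} -> Prop :=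
| greedy0 : greedy_run f X 0 set0
| greedyS k B (e : V) :
    greedy_run f X k B ->
    e \notin X :|: B ->
    (forall e' : V, e' \notin X :|: B ->
        f (e' |: (X :|: B)) - f (X :|: B) <= f (e |: (X :|: B)) - f (X :|: B)) ->
    greedy_run f X k.+1 (e |: B).

End Defs.

Definition ceil_div (m n : nat) : nat := (m + n.-1) %/ n.

(* Main.v *)
Require Import Defs.
From mathcomp Require Import all_boot all_order all_algebra.
From mathcomp Require Import reals sequences exp.
From mathcomp Require Import ring lra zify.
Import Order.TTheory GRing.Theory Num.Theory.
Local Open Scope ring_scope.

Section Proof.
Variables (R : realType) (V : finType) (f : {set V} -> R).
Hypothesis mono : nondecreasing_setfun f.
Hypothesis subm : submodular_setfun f.

Lemma sub_sum (S : {set V}) (s : seq V) :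
  f (S :|: [set x in s]) - f S <= \sum_(p <- s) (f (p |: S) - f S).
Proof.
elim: s => [|p s IH].
  rewrite big_nil.
  have -> : [set x in [::]] = (set0 : {set V}) by apply/setP => x; rewrite !inE.
  by rewrite setU0 subrr.
rewrite big_cons.
set Y := S :|: [set x in s].
have E : S :|: [set x in p :: s] = p |: Y.
  apply/setP => x; rewrite !inE; by case: (x == p); case: (x \in S).
rewrite E.
have H1 : f (p |: Y) - f Y <= f (p |: S) - f S.
  case pY: (p \in Y).
    have -> : p |: Y = Y by apply/setP => x; rewrite in_setU1; case: eqP => // ->; rewrite pY.
    by rewrite subrr subr_ge0; apply: mono; apply: subsetUr.
  by apply: subm; [apply: subsetUl | rewrite pY].
have -> : f (p |: Y) - f S = (f (p |: Y) - f Y) + (f Y - f S) by ring.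
exact: lerD.
Qed.

Lemma step_lem (OPT X B : {set V}) (e : V) (N : nat) :
  (0 < N)%N -> (#|OPT :\: X| <= N)%N ->
  e \notin X :|: B ->
  (forall e' : V, e' \notin X :|: B ->
        f (e' |: (X :|: B)) - f (X :|: B) <= f (e |: (X :|: B)) - f (X :|: B)) ->
  f (OPT :|: X) - f (e |: (X :|: B)) <= (1 - N%:R^-1) * (f (OPT :|: X) - f (X :|: B)).
Proof.
move=> N0 HN _ Hmax.
set S := X :|: B.
set g := f (e |: S) - f S.
have g0 : 0 <= g by rewrite subr_ge0; apply: mono; apply: subsetUr.
set A := (OPT :\: X) :\: S.
have HA : [set x in enum A] = A by apply/setP => x; rewrite inE mem_enum.
have HT : f (OPT :|: X) <= f (S :|: A).
  apply: mono; apply/subsetP => x; rewrite /A /S !inE.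
  by case: (x \in X); case: (x \in B); case: (x \in OPT).
have Hs := sub_sum S (enum A).
rewrite HA big_enum /= in Hs.
have Hsum : \sum_(p in A) (f (p |: S) - f S) <= \sum_(p in A) g.
  apply: ler_sum => p; rewrite /A !inE => /andP [pS _].
  by apply: Hmax; rewrite /S inE.
rewrite sumr_const in Hsum.
have cA : (#|A| <= N)%N.
  apply: leq_trans HN; apply: subset_leq_card; apply: subsetDl.
have Hg : g *+ #|A| <= N%:R * g.
  by rewrite -[g *+ _]mulr_natl ler_wpM2r // ler_nat.
set D := f (OPT :|: X) - f S.
have HD : D <= N%:R * g by rewrite /D; lra.
have Np : 0 < (N%:R : R) by rewrite ltr0n.
set w := (N%:R : R)^-1.
have w0 : 0 < w by rewrite invr_gt0.
have wN : w * N%:R = 1 by rewrite mulVf // gt_eqF.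
have : w * D <= g.
  have := ler_wpM2l (ltW w0) HD. by rewrite mulrA wN mul1r.
rewrite -/w /g /D; nra.
Qed.

Lemma iter_lem (OPT X : {set V}) (N : nat) j B :
  (0 < N)%N -> (#|OPT :\: X| <= N)%N ->
  greedy_run f X j B ->
  f (OPT :|: X) - f (X :|: B) <= (1 - N%:R^-1) ^+ j * (f (OPT :|: X) - f X).
Proof.
move=> N0 HN; elim => [|k B' e _ IH en Hmax].
  by rewrite setU0 expr0 mul1r.
have q0 : 0 <= 1 - (N%:R : R)^-1.
  by rewrite subr_ge0 invf_le1 ?ltr0n // ler1n.
rewrite setUCA.
apply: le_trans (step_lem OPT X B' e N N0 HN en Hmax) _.
rewrite exprS -mulrA; exact: ler_wpM2l.
Qed.

End Proof.

Lemma bern (R : realType) (y : R) (c : nat) : 0 <= y -> y <= 1 ->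
  1 - y ^+ c <= c%:R * (1 - y).
Proof.
move=> y0 y1; elim: c => [|c IH]; first by rewrite expr0 subrr mul0r.
have h := exprn_ile1 c y0 y1.
have h0 : 0 <= y ^+ c by apply: exprn_ge0.
rewrite exprS -addn1 natrD; nra.
Qed.

Lemma pow_exp (R : realType) (n : nat) : (0 < n)%N ->
  (1 - (n%:R : R)^-1) ^+ n <= (expR (1 : R))^-1.
Proof.
move=> n0.
have np : 0 < (n%:R : R) by rewrite ltr0n.
have q0 : 0 <= 1 - (n%:R : R)^-1 by rewrite subr_ge0 invf_le1 // ler1n.
have h : 1 - (n%:R : R)^-1 <= expR (- (n%:R^-1)) by have := expR_ge1Dx (- (n%:R : R)^-1).
apply: le_trans (lerXn2r n _ _ h) _.
- by rewrite nnegrE.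
- by rewrite nnegrE expR_ge0.
by rewrite -expRM_natl mulrN mulfV ?gt_eqF // expRN.
Qed.

Theorem mainTheorem1 (R : realType) (V : finType) (f : {set V} -> R) (b : nat)
  (A : {set V}) (As Bs : nat -> {set V}) (istar : nat) (OPT : {set V}) :
  nondecreasing_setfun f -> submodular_setfun f ->
  (1 <= b)%N -> (b <= #|V|)%N ->
  #|A| = b ->
  (forall i, (i <= b)%N -> As i \subset A /\ #|As i| = i) ->
  (forall i, (i <= b)%N -> greedy_run f (As i) (b - i) (Bs i)) ->
  (istar <= b)%N ->
  (forall j, (j <= b)%N -> f (As j :|: Bs j) <= f (As istar :|: Bs istar)) ->
  #|OPT| = b ->
  (forall S : {set V}, #|S| = b -> f S <= f OPT) ->
  let U := As istar :|: Bs istar in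
  f A <= f U /\
  (forall i, (i < b)%N ->
     f (As i) + (1 - (expR 1)^-1) / (ceil_div #|OPT :\: As i| (b - i))%:R
                * (f (OPT :|: As i) - f (As i)) <= f U).
Proof.
move=> mono subm b1 bV cA HAs HBs ist Hbest cO Hopt U.
split.
  have [sA cAb] := HAs b (leqnn b).
  have eA : As b = A by apply/eqP; rewrite eqEcard sA cA cAb leqnn.
  have gB := HBs b (leqnn b); rewrite subnn in gB.
  have eB : Bs b = set0 by inversion gB.
  by have := Hbest b (leqnn b); rewrite eA eB setU0.
move=> i ib.
have ibl : (i <= b)%N by apply: ltnW.
apply: le_trans (Hbest i ibl).
set X := As i. set B := Bs i. set k := (b - i)%N.
set m := #|OPT :\: X|. set c := ceil_div m k.
have fXB : f X <= f (X :|: B) by apply: mono; apply: subsetUl.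
have k0 : (0 < k)%N by rewrite /k subn_gt0.
case c0 : (c == 0)%N.
  by rewrite (eqP c0) invr0 mulr0 mul0r addr0.
have cpos : (0 < c)%N by rewrite lt0n c0.
have mck : (m <= c * k)%N.
  rewrite /c /ceil_div.
  have := divn_eq (m + k.-1) k; have := ltn_pmod (m + k.-1) k0. lia.
have N0 : (0 < c * k)%N by rewrite muln_gt0 cpos k0.
have H := @iter_lem R V f mono subm OPT X (c * k) (b - i) B N0 mck (HBs i ibl).
rewrite -/X -/B -/k in H.
set y := (1 - ((c * k)%N%:R : R)^-1) ^+ k in H.
set D := f (OPT :|: X) - f X.
have D0 : 0 <= D by rewrite subr_ge0; apply: mono; apply: subsetUr.
have q0 : 0 <= 1 - ((c * k)%N%:R : R)^-1.
  by rewrite subr_ge0 invf_le1 ?ltr0n // ler1n.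
have y0 : 0 <= y by apply: exprn_ge0.
have y1 : y <= 1.
  apply: exprn_ile1 => //; have : 0 <= ((c * k)%N%:R : R)^-1 by rewrite invr_ge0 ler0n.
  lra.
have yc : y ^+ c <= (expR (1:R))^-1.
  rewrite /y -exprM [(k * c)%N]mulnC; exact: pow_exp.
have hb := bern R y c y0 y1.
have cp : 0 < (c%:R : R) by rewrite ltr0n.
have key : (1 - (expR (1:R))^-1) / c%:R <= 1 - y.
  rewrite mulrC ler_pdivrMl //; lra.
have := ler_wpM2r D0 key.
rewrite /D; lra.
Qed.
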